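(* Let $X$ be a random vector in $\mathcal{X}\subset\mathbb{R}^d$ with distribution $F$ having a density $f$ with respect to Lebesgue measure $Leb$, and let $\mathcal{G}$ be a class of Borel subsets of $\mathcal{X}$. Assume there is a countable subcollection $\Pi=\{F_i\}_{i\ge1}\subset\mathcal{G}$ forming a partition of $\mathcal{X}$ with $\sigma(\Pi)\subset\mathcal{G}$. Let $\mathcal{F}=\sigma(\Pi)$ and $f_\Pi(x)=\sum_{i\ge1}\mathds{1}_{x\in F_i}\frac{1}{Leb(F_i)}\int_{F_i}f(y)\,dy$. For a class $\mathcal{C}$ of measurable sets define $\textsc{EM}^*_{\mathcal{C}}(t)=\max_{\Omega\in\mathcal{C}}\{F(\Omega)-t\,Leb(\Omega)\}$, and $\textsc{EM}^*(t)=\max_{\Omega\ \text{measurable}}\{F(\Omega)-t\,Leb(\Omega)\}$. Then for every $t\in[0,\|f\|_\infty]$, $$0\le\textsc{EM}^*(t)-\textsc{EM}^*_{\mathcal{F}}(t)\le\|f-f_\Pi\|_{L^1}.$$ Consequently, $\textsc{EM}^*-\textsc{EM}^*_{\mathcal{G}}$ is uniformly bounded on $[0,\|f\|_\infty]$ by $\|f-f_\Pi\|_{L^1}$.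
   Context: $\sigma(\Pi)$ denotes the $\sigma$-algebra generated by $\Pi$; $\|f\|_\infty=\sup_x|f(x)|$. *)

(* Defs.v *)
From HB Require Import structures.
From mathcomp Require Import all_boot all_order all_algebra.
From mathcomp Require Import all_classical all_reals all_analysis.
Set Implicit Arguments. Unset Strict Implicit. Unset Printing Implicit Defensive.
Import Order.TTheory GRing.Theory Num.Theory.
Local Open Scope classical_set_scope.
Local Open Scope ring_scope.

(* R^d is modelled as d.-tuple R with its canonical measurable structure
   (the product sigma-algebra of the Borel sets = Borel sets of R^d). *)

(* By uniqueness of measure extension (closed boxes form a pi-system generating
   the Borel sigma-algebra, and R^d is a countable union of boxes of finite
   measure) this characterizes Lebesgue measure on Borel sets uniquely. *)
Definition is_lebesgue_measure {R : realType} (d : nat)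
    (leb : set (d.-tuple R) -> \bar R) : Prop :=
  forall a b : 'I_d -> R, (forall i, a i <= b i) ->
    leb [set x | forall i, a i <= tnth x i <= b i] =
    (\prod_(i < d) (b i - a i))%:E.

Section defs.
Context {R : realType} {d : nat}.
Variable leb : {measure set (d.-tuple R) -> \bar R}.
Local Open Scope ereal_scope.

Definition distr_of (f : d.-tuple R -> R) (A : set (d.-tuple R)) : \bar R :=
  \int[leb]_(x in A) (f x)%:E.

Definition EMstar_class (f : d.-tuple R -> R) (C : set (set (d.-tuple R)))
    (t : R) : \bar R :=
  ereal_sup [set distr_of f Om - t%:E * leb Om | Om in C].

Definition EMstar (X : set (d.-tuple R)) (f : d.-tuple R -> R) (t : R) : \bar R :=
  EMstar_class f [set Om | measurable Om /\ Om `<=` X] t.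

Definition f_Pi (f : d.-tuple R -> R) (P : nat -> set (d.-tuple R))
    (x : d.-tuple R) : \bar R :=
  \sum_(0 <= i <oo) ((\1_(P i) x)%:E * ((leb (P i))^-1 * distr_of f (P i))).

Definition L1_dist (X : set (d.-tuple R)) (f : d.-tuple R -> R)
    (P : nat -> set (d.-tuple R)) : \bar R :=
  \int[leb]_(x in X) `|(f x)%:E - f_Pi f P x|.

Definition sup_norm (X : set (d.-tuple R)) (f : d.-tuple R -> R) : \bar R :=
  ereal_sup [set `|f x|%:E | x in X].

End defs.

(* Main.v *)
Require Import Defs.
From HB Require Import structures.
From mathcomp Require Import all_boot all_order all_algebra.
From mathcomp Require Import all_classical all_reals all_analysis.
From mathcomp Require Import measurable_realfun ring lra.
Import Order.TTheory GRing.Theory Num.Theory.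
Local Open Scope classical_set_scope.
Local Open Scope ring_scope.

Section helpers.
Local Open Scope ereal_scope.

Lemma fPi_on (R : realType) (d : nat)
  (leb : {measure set (d.-tuple R) -> \bar R}) (f : d.-tuple R -> R)
  (f_ge0 : forall x, (0 <= f x)%R)
  (P : nat -> set (d.-tuple R))
  (HPdisj : forall i j, i <> j -> P i `&` P j = set0) j x :
  P j x -> f_Pi leb f P x = (leb (P j))^-1 * distr_of leb f (P j).
Proof.
move=> Pjx; rewrite /f_Pi.
have c0 i : 0 <= (leb (P i))^-1 * distr_of leb f (P i).
  by apply: mule_ge0; [rewrite inve_ge0// | apply: integral_ge0 => y _; rewrite lee_fin].
rewrite (nneseries_split 0 j.+1); last first.
  by move=> k _; apply: mule_ge0 => //; rewrite lee_fin.
rewrite add0n eseries0 ?adde0; last first.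
  move=> i ji _; rewrite indicE.
  have -> : (x \in P i) = false.
    apply/negbTE/negP; rewrite inE => Pix.
    have : (P i `&` P j) x by [].
    by rewrite HPdisj // => /eqP; rewrite gtn_eqF.
  by rewrite mul0e.
rewrite big_nat_recr //= big1_seq ?add0e; last first.
  move=> i; rewrite mem_index_iota => /andP[_ ij].
  rewrite indicE.
  have -> : (x \in P i) = false.
    apply/negbTE/negP; rewrite inE => Pix.
    have : (P i `&` P j) x by [].
    by rewrite HPdisj // => /eqP; rewrite ltn_eqF.
  by rewrite mul0e.
by rewrite indicE mem_set // mul1e.
Qed.

Lemma cell (R : realType) (d : nat)
  (leb : {measure set (d.-tuple R) -> \bar R}) (f : d.-tuple R -> R)
  (mf : measurable_fun setT f) (f_ge0 : forall x, (0 <= f x)%R)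
  (A B : set (d.-tuple R)) (mA : measurable A) (mB : measurable B) (AB : A `<=` B)
  (Bfin : distr_of leb f B \is a fin_num) (t : R) (t0 : (0 <= t)%R) :
  forall c, c = (leb B)^-1 * distr_of leb f B ->
  distr_of leb f A + (if t%:E < c then t%:E * leb B else 0) <=
  (if t%:E < c then distr_of leb f B else 0) + t%:E * leb A +
  \int[leb]_(x in B) `|(f x)%:E - c|.
Proof.
move=> c hc.
have FB0 : 0 <= distr_of leb f B by apply: integral_ge0 => y _; rewrite lee_fin.
have c0 : 0 <= c by rewrite hc; apply: mule_ge0 => //; rewrite inve_ge0.
have mfE (D : set (d.-tuple R)) : measurable_fun D (fun x => (f x)%:E).
  by apply/measurable_EFinP; apply: measurable_funS mf.
have mh (D : set (d.-tuple R)) : measurable_fun D (fun x => `|(f x)%:E - c|).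
  apply: (measurableT_comp (f := abse)) => //.
  exact: emeasurable_funB (mfE D) (measurable_cst c).
set E := \int[leb]_(x in B) _.
have step1 : distr_of leb f A <= c * leb A + E.
  rewrite /distr_of.
  apply: (@le_trans _ _ (\int[leb]_(x in A) (c + `|(f x)%:E - c|))).
    apply: ge0_le_integral => //.
    all: try (by move=> x _; rewrite lee_fin).
    all: try exact: mfE.
    all: try (by apply: emeasurable_funD => //; exact: mh).
    move=> x _; clear -c0; move: c0; case: c => [r||] //= r0.
      rewrite -EFinD lee_fin; have := ler_norm (f x - r).
      set u := `|_|%R; move=> hu; lra.
    by rewrite leey.
  rewrite ge0_integralD //; try exact: mh; try exact: measurable_cst.
  rewrite integral_cst //; apply: leeD2l.
  by apply: ge0_subset_integral => //; exact: mh.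
have mle : leb A <= leb B by apply: le_measure => //; rewrite inE.
have mA0 : 0 <= leb A by [].
case: ifPn => tc; last first.
  rewrite adde0 add0e; apply: (le_trans step1); apply: leeD2r.
  by apply: lee_wpmul2r => //; rewrite leNgt.
have E0 : 0 <= E by apply: integral_ge0.
have FA0 : 0 <= distr_of leb f A by apply: integral_ge0 => y _; rewrite lee_fin.
have t0' : (0 <= t%:E) by rewrite lee_fin.
have LB0 : 0 <= leb B by [].
have [l Ll] : exists l, leb B = l%:E.
  move: LB0 tc; rewrite hc; case: (leb B) => [l||] //; first by exists l.
  by rewrite invey mul0e ltNge t0'.
have l0 : (0 < l)%R.
  rewrite lt_neqAle -lee_fin -Ll LB0 andbT; apply/eqP => l0.
  move: tc; rewrite hc Ll -l0 /distr_of null_set_integral //; last by rewrite Ll -l0.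
  by rewrite mule0 ltNge t0'.
have [phi Fphi] : exists phi, distr_of leb f B = phi%:E.
  by move: Bfin; case: (distr_of leb f B) => [p||] //; exists p.
have cE : c = (l^-1 * phi)%:E by rewrite hc Ll Fphi inver gt_eqF.
have [mu Amu] : exists mu, leb A = mu%:E.
  by move: mA0 mle; rewrite Ll; case: (leb A) => [p||] //; exists p.
move: E0 step1 mle mA0 tc FA0; rewrite Ll Amu cE Fphi.
case: E => [e||] //; last first.
  by move=> *; rewrite addey ?leey // adde_Neq_Ny //.
case: (distr_of leb f A) => [a||] //.
rewrite -!EFinM -!EFinD !lee_fin lte_fin => e0 h1 h2 h3 h4 h5.
have hphi : phi = ((l^-1 * phi) * l)%R by rewrite mulrAC mulVf ?gt_eqF // mul1r.
move: h1 h4; set k := (l^-1 * phi)%R; rewrite hphi => h1 h4.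
have hk : (0 <= (k - t) * (l - mu))%R by apply: mulr_ge0; lra.
rewrite -/k; nra.
Qed.
Lemma arith (R : realType) (a b c dd e : \bar R) : a \is a fin_num -> c \is a fin_num ->
  e \is a fin_num -> 0 <= b -> 0 <= dd -> a + b <= c + dd + e -> a - dd <= c - b + e.
Proof.
case: a => [a||] //; case: c => [c||] //; case: e => [e||] //.
case: dd => [r||] //; last by move=> *; rewrite addeNy leNye.
case: b => [s||] //.
by rewrite -?EFinN -!EFinD !lee_fin => h; lra.
Qed.
End helpers.

Theorem lemma3 (R : realType) (d : nat)
  (leb : {measure set (d.-tuple R) -> \bar R})
  (Hleb : is_lebesgue_measure leb)
  (X : set (d.-tuple R)) (mX : measurable X)
  (f : d.-tuple R -> R)
  (mf : measurable_fun setT f) (f_ge0 : forall x, 0 <= f x)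
  (f_int1 : (\int[leb]_(x in setT) (f x)%:E = 1)%E)
  (f_X1 : (\int[leb]_(x in X) (f x)%:E = 1)%E)
  (G : set (set (d.-tuple R)))
  (HG : forall A, G A -> measurable A /\ A `<=` X)
  (P : nat -> set (d.-tuple R))
  (HPG : forall i, G (P i))
  (HPdisj : forall i j, i <> j -> P i `&` P j = set0)
  (HPcover : \bigcup_i P i = X)
  (HsigmaG : <<s X, range P >> `<=` G) :
  (forall t : R, 0 <= t -> (t%:E <= sup_norm X f)%E ->
     (0 <= EMstar leb X f t - EMstar_class leb f (<<s X, range P >>) t
        <= L1_dist leb X f P)%E) /\
  (forall t : R, 0 <= t -> (t%:E <= sup_norm X f)%E ->
     (0 <= EMstar leb X f t - EMstar_class leb f G t
        <= L1_dist leb X f P)%E).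

Proof.
have mP i : measurable (P i) by case: (HG _ (HPG i)).
have PX i : P i `<=` X by case: (HG _ (HPG i)).
have HF A : <<s X, range P >> A -> measurable A /\ A `<=` X.
  by move=> /HsigmaG /HG.
have F0 : <<s X, range P >> set0 by exact: sigma_algebra0.
have G0 : G set0 by apply: HsigmaG.
have mfE (D : set (d.-tuple R)) : measurable_fun D (fun x => (f x)%:E).
  by apply/measurable_EFinP; apply: measurable_funS mf.
have distr_ge0 A : (0 <= distr_of leb f A)%E.
  by apply: integral_ge0 => x _; rewrite lee_fin.
have distr_le1 A : measurable A -> A `<=` X -> (distr_of leb f A <= 1)%E.
  move=> mA AX; rewrite -f_X1; apply: ge0_subset_integral => //.
  by move=> x _; rewrite lee_fin.
have distr_fin A : measurable A -> A `<=` X -> distr_of leb f A \is a fin_num.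
  move=> mA AX; rewrite ge0_fin_numE //.
  exact: le_lt_trans (distr_le1 _ mA AX) (ltry _).
have EMb C t : 0 <= t -> C set0 -> (forall A, C A -> measurable A /\ A `<=` X) ->
    (0 <= EMstar_class leb f C t <= 1)%E.
  move=> t0 C0 HC; apply/andP; split.
    apply: le_trans (ereal_sup_ubound _); last by exists set0.
    by rewrite /distr_of integral_set0 measure0 mule0 sube0.
  apply: ub_ereal_sup => _ [A CA <-]; have [mA AX] := HC _ CA.
  apply: le_trans (distr_le1 _ mA AX).
  rewrite -[leRHS]adde0; apply: leeD2l; rewrite oppe_le0.
  by apply: mule_ge0; rewrite // lee_fin.
have EMfin C t : 0 <= t -> C set0 -> (forall A, C A -> measurable A /\ A `<=` X) ->
    EMstar_class leb f C t \is a fin_num.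
  move=> t0 C0 HC; have /andP[h0 h1] := EMb C t t0 C0 HC.
  by rewrite ge0_fin_numE // (le_lt_trans h1 (ltry _)).
have EMle C1 C2 t : C1 `<=` C2 -> (EMstar_class leb f C1 t <= EMstar_class leb f C2 t)%E.
  by move=> C12; apply: ereal_sup_le; apply: image_subset.
have Xclass : forall A, [set Om | measurable Om /\ Om `<=` X] A -> measurable A /\ A `<=` X.
  by [].
have Xclass0 : [set Om | measurable Om /\ Om `<=` X] set0 by split.
have main t : 0 <= t -> (EMstar leb X f t <=
    EMstar_class leb f (<<s X, range P >>) t + L1_dist leb X f P)%E.
  move=> t0.
  have /andP[EF0 EF1] := EMb _ t t0 F0 HF.
  pose c i := ((leb (P i))^-1 * distr_of leb f (P i))%E.
  have fPiE i x : P i x -> f_Pi leb f P x = c i by exact: fPi_on.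
  have triv : trivIset setT P.
    move=> i j _ _ [x [Pix Pjx]]; apply: contrapT => ij.
    have : (P i `&` P j) x by [].
    by rewrite HPdisj.
  have mh : measurable_fun X (fun x => `|(f x)%:E - f_Pi leb f P x|)%E.
    rewrite -HPcover; apply/measurable_fun_bigcup => // i.
    have mhi : measurable_fun (P i) (fun x => `|(f x)%:E - c i|%E).
      apply: (measurableT_comp (f := abse)) => //.
      exact: emeasurable_funB (mfE _) (measurable_cst _).
    apply: eq_measurable_fun mhi.
    by move=> x; rewrite inE => Pix; rewrite (fPiE i).
  pose E i := (\int[leb]_(x in P i) `|(f x)%:E - c i|)%E.
  have L1E : L1_dist leb X f P = (\sum_(i <oo) E i)%E.
    rewrite /L1_dist -HPcover ge0_integral_bigcup //; last by rewrite HPcover.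
    apply: eq_eseriesr => i _; apply: eq_integral => x; rewrite inE => Pix.
    by rewrite (fPiE i).
  have L1ge0 : (0 <= L1_dist leb X f P)%E by apply: integral_ge0.
  have [L1oo|L1fin] : L1_dist leb X f P = +oo%E \/ L1_dist leb X f P \is a fin_num.
    by move: L1ge0; case: (L1_dist _ _ _ _) => [r||] //; [right | left].
    rewrite L1oo addey ?leey //; apply/eqP => h; move: EF0; rewrite h.
    by rewrite leNgt ltNy0.
  apply: ub_ereal_sup => _ [Om [mOm OmX] <-].
  pose S i := (t%:E < c i)%E.
  pose Q i := if S i then P i else set0.
  have mQ i : measurable (Q i) by rewrite /Q; case: ifP.
  have QP i : Q i `<=` P i by rewrite /Q; case: ifP => _ //; apply: sub0set.
  pose Om' := \bigcup_i Q i.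
  have FOm' : <<s X, range P >> Om'.
    apply: sigma_algebra_bigcup => i; rewrite /Q; case: ifP => _.
      by apply: sub_sigma_algebra; exists i.
    exact: sigma_algebra0.
  have [mOm' Om'X] := HF _ FOm'.
  have trivQ : trivIset setT Q.
    have -> : Q = (fun i => P i `&` (if S i then setT else set0)).
      by apply/funext => i; rewrite /Q; case: ifP; rewrite ?setIT ?setI0.
    exact: trivIset_setIr.
  have trivO : trivIset setT (fun i => Om `&` P i) by exact: trivIset_setIl.
  have OmE : Om = \bigcup_i (Om `&` P i).
    by rewrite -setI_bigcupr HPcover; apply/esym/setIidl.
  have mOP i : measurable (Om `&` P i) by apply: measurableI.
  have key : (distr_of leb f Om + t%:E * leb Om' <=
      distr_of leb f Om' + t%:E * leb Om + L1_dist leb X f P)%E.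
    have hA : distr_of leb f Om = (\sum_(i <oo) distr_of leb f (Om `&` P i))%E.
      rewrite /distr_of {1}OmE ge0_integral_bigcup //.
      by move=> x _; rewrite lee_fin.
    have hB : leb Om = (\sum_(i <oo) leb (Om `&` P i))%E.
      by rewrite {1}OmE measure_semi_bigcup // -OmE.
    have hC : distr_of leb f Om' = (\sum_(i <oo) (if S i then distr_of leb f (P i) else 0))%E.
      rewrite /distr_of ge0_integral_bigcup //; last first.
        by move=> x _; rewrite lee_fin.
      apply: eq_eseriesr => i _; rewrite /Q; case: ifP => // _.
      by rewrite integral_set0.
    have hD : leb Om' = (\sum_(i <oo) (if S i then leb (P i) else 0))%E.
      rewrite measure_semi_bigcup //.
      by apply: eq_eseriesr => i _; rewrite /Q; case: ifP => // _; rewrite measure0.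
    rewrite hA hB hC hD L1E -!nneseriesZl.
    all: try (by move=> i _; case: ifP).
    rewrite -!nneseriesD.
    all: try (move=> i _ _; rewrite /E; (repeat (first [ done | exact: distr_ge0 | exact: abse_ge0 | apply: adde_ge0 | apply: mule_ge0 | (case: ifP => _) | (apply: integral_ge0 => ? _) | (rewrite lee_fin) ])); done).
    all: try (by move=> i _).
    all: try (by move=> i _ _; rewrite /E; apply: integral_ge0 => x _; exact: abse_ge0).
    apply: lee_nneseries.
      by move=> i _ _; apply: adde_ge0 => //; apply: mule_ge0; [rewrite lee_fin | case: ifP].
    move=> i _.
    have -> : (t%:E * (if S i then leb (P i) else 0) =
        if S i then t%:E * leb (P i) else 0)%E by case: ifP; rewrite ?mule0.
    exact: (@cell R d leb f mf f_ge0 _ _ (mOP i) (mP i) (@subIsetr _ _ _) (distr_fin _ (mP i) (PX i)) t t0 (c i) (erefl _)).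
  apply: le_trans (_ : (distr_of leb f Om' - t%:E * leb Om' + L1_dist leb X f P <= _)%E).
    apply: arith => //.
    - exact: distr_fin.
    - exact: distr_fin.
    - by apply: mule_ge0; rewrite // lee_fin.
    - by apply: mule_ge0; rewrite // lee_fin.
  by apply: leeD2r; apply: ereal_sup_ubound; exists Om'.
have XF : <<s X, range P >> `<=` [set Om | measurable Om /\ Om `<=` X] := HF.
have XG : G `<=` [set Om | measurable Om /\ Om `<=` X] := HG.
split => t t0 _.
- have Ffin := EMfin _ t t0 F0 HF.
  apply/andP; split.
    by rewrite sube_ge0 ?Ffin ?orbT //; exact: EMle.
  by rewrite leeBlDr // addeC; exact: main.
- have Gfin := EMfin _ t t0 G0 HG.
  apply/andP; split.
    by rewrite sube_ge0 ?Gfin ?orbT //; exact: EMle.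
  rewrite leeBlDr // addeC; apply: le_trans (main t t0) _.
  by apply: leeD2r; exact: EMle.
Qed.
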